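(* For every $\varepsilon>0$ and every $A\subseteq\mathbb R$ containing a nonempty open interval, $\mathfrak{ss}_e^\varepsilon=\mathfrak{ss}_l^A=\mathfrak{ss}_c$.
   Context: Let $\mathfrak S_{cc}$ be the set of all sequences $\mathbf a=\langle a_i:i\in\omega\rangle$ of rational numbers with $a_i\to0$ such that $\sum_i a_i$ is conditionally convergent (converges to a real number, with the positive terms summing to $+\infty$ and the negative terms to $-\infty$). Let $[\omega]^\omega_\omega$ be the set of infinite coinfinite subsets of $\omega$; for such $X$ with increasing enumeration $\langle i_n\rangle$, $\sum_X\mathbf a$ denotes $\sum_n a_{i_n}$. $\mathfrak{ss}_c$ is the least cardinality of $\mathcal X\subseteq[\omega]^\omega_\omega$ such that every $\mathbf a\in\mathfrak S_{cc}$ has some $X\in\mathcal X$ with $\sum_X\mathbf a$ convergent (to a real number). For $A\subseteq\mathbb R$, $\mathfrak{ss}_l^A$ is the least cardinality of $\mathcal X\subseteq[\omega]^\omega_\omega$ such that every $\mathbf a\in\mathfrak S_{cc}$ has some $X\in\mathcal X$ for which $\sum_X\mathbf a$ converges to a limit in $A$. For $\varepsilon>0$, $\mathfrak{ss}_e^\varepsilon$ is the least cardinality of $\mathcal X\subseteq[\omega]^\omega_\omega$ such that every $\mathbf a\in\mathfrak S_{cc}$ has some $X\in\mathcal X$ for which $\sum_X\mathbf a$ converges to a limit in $(\sum\mathbf a-\varepsilon,\sum\mathbf a+\varepsilon)$. *)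

(* Defs.v *)
From HB Require Import structures.
From mathcomp Require Import all_boot all_order all_algebra.
From mathcomp Require Import all_classical all_reals all_analysis.
Set Implicit Arguments. Unset Strict Implicit. Unset Printing Implicit Defensive.
Import Order.TTheory GRing.Theory Num.Theory.
Import numFieldNormedType.Exports.
Local Open Scope classical_set_scope.
Local Open Scope ring_scope.

Definition inf_coinf (X : set nat) : Prop :=
  infinite_set X /\ infinite_set (~` X).

Definition incr_enum (X : set nat) (e : nat -> nat) : Prop :=
  (forall m n : nat, (m < n)%N -> (e m < e n)%N) /\ range e = X.

Definition rseq (R : realType) (a : nat -> rat) : nat -> R :=
  fun n => ratr (a n).

Definition S_cc (R : realType) (a : nat -> rat) : Prop :=
  rseq R a @ \oo --> 0 /\
  (exists s : R, series (rseq R a) @ \oo --> s) /\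
  series (fun n => Num.max (rseq R a n) 0) @ \oo --> +oo /\
  series (fun n => Num.min (rseq R a n) 0) @ \oo --> -oo.

Definition subsum_to (R : realType) (a : nat -> rat) (X : set nat) (l : R) : Prop :=
  exists e : nat -> nat, incr_enum X e /\
    series (fun n => rseq R a (e n)) @ \oo --> l.

Definition ss_c_family (R : realType) (F : set (set nat)) : Prop :=
  F `<=` inf_coinf /\
  forall a, S_cc R a -> exists2 X, F X & exists l : R, subsum_to a X l.

Definition ss_l_family (R : realType) (A : set R) (F : set (set nat)) : Prop :=
  F `<=` inf_coinf /\
  forall a, S_cc R a -> exists2 X, F X & exists2 l : R, A l & subsum_to a X l.

Definition ss_e_family (R : realType) (eps : R) (F : set (set nat)) : Prop :=
  F `<=` inf_coinf /\
  forall a, S_cc R a -> exists2 X, F X &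
    exists s l : R, series (rseq R a) @ \oo --> s /\ subsum_to a X l /\
                    `|l - s| < eps.

(* "least cardinality of a family with property P" equals
   "least cardinality of a family with property Q" *)
Definition same_min_card (P Q : set (set nat) -> Prop) : Prop :=
  (forall F, P F -> exists G, Q G /\ (G #<= F)%card) /\
  (forall G, Q G -> exists F, P F /\ (F #<= G)%card).

(* Main.v *)
Require Import Defs.
From HB Require Import structures.
From mathcomp Require Import all_boot all_order all_algebra.
From mathcomp Require Import all_classical all_reals all_analysis.
From mathcomp Require Import ring lra zify.
Import Order.TTheory GRing.Theory Num.Theory.
Import numFieldNormedType.Exports.
Local Open Scope classical_set_scope.
Local Open Scope ring_scope.
Lemma card_le_inj (T U : Type) (A : set T) (B : set U) (f : T -> U) :
  {in A &, injective f} -> (forall x, A x -> B (f x)) -> (A #<= B)%card.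
Proof.
move=> fi fAB.
apply: (@card_le_trans _ _ _ (f @` A)).
  by have /card_eqPle[] := card_esym (inj_card_eq fi).
by apply: subset_card_le => _ [x Ax <-]; apply: fAB.
Qed.

Section CardX.
Variable T : pointedType.

Definition Dm (S : set ((T * nat) * T)) : set T :=
  fun x => exists k y, S ((x, k), y).

Definition PP (F : set T) (S : set ((T * nat) * T)) : Prop :=
 [/\ (forall x k y, S ((x, k), y) -> [/\ F x, F y & Dm S y]),
     (forall p y y', S (p, y) -> S (p, y') -> y = y'),
     (forall p p' y, S (p, y) -> S (p', y) -> p = p') &
     (forall x, Dm S x -> forall k, exists y, S ((x, k), y))].

Lemma PP_chain (F : set T) : forall FF : set (set ((T * nat) * T)),
  FF `<=` PP F -> total_on FF subset -> PP F (\bigcup_(X in FF) X).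
Proof.
move=> FF FFP tot; split.
- move=> x k y [S FS Sxy]; have [h1 _ _ _] := FFP S FS.
  have [Fx Fy [k' [y' Sy]]] := h1 _ _ _ Sxy; split => //.
  by exists k', y', S.
- move=> p y y' [S1 FS1 H1] [S2 FS2 H2].
  have [S12|S21] := tot _ _ FS1 FS2.
    by have [_ h2 _ _] := FFP _ FS2; exact: h2 _ _ _ (S12 _ H1) H2.
  by have [_ h2 _ _] := FFP _ FS1; exact: h2 _ _ _ H1 (S21 _ H2).
- move=> p p' y [S1 FS1 H1] [S2 FS2 H2].
  have [S12|S21] := tot _ _ FS1 FS2.
    by have [_ _ h3 _] := FFP _ FS2; exact: h3 _ _ _ (S12 _ H1) H2.
  by have [_ _ h3 _] := FFP _ FS1; exact: h3 _ _ _ H1 (S21 _ H2).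
- move=> x [k [y [S FS Sxy]]] k'; have [_ _ _ h4] := FFP _ FS.
  have [y' Sy'] := h4 x (ex_intro _ k (ex_intro _ y Sxy)) k'.
  by exists y', S.
Qed.

Lemma cardX_nat (F : set T) : infinite_set F ->
  (F `*` [set: nat] #<= F)%card.
Proof.
move=> Finf.
have [S [PS Smax]] := Zorn_bigcup (@PP_chain F).
have [h1 h2 h3 h4] := PS.
have finR : finite_set (F `\` Dm S).
  apply: contrapT => Rinf.
  have /pcard_leP/injfunPex[g gfun ginj] := (infiniteP _).1 Rinf.
  have gF i : F (g i) by have [] := gfun i I.
  have gD i : ~ Dm S (g i) by have [] := gfun i I.
  have gI i j : g i = g j -> i = j by move=> e; apply: ginj; rewrite ?in_setE.
  pose B := S `|` [set z | exists i k, z = ((g i, k), g (pickle (i, k)))].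
  apply: (Smax B).
    split; first by move=> z Sz; left.
    move=> H; have Sz : S ((g 0%N, 0%N), g (pickle (0%N, 0%N))).
      by apply: H; right; exists 0%N, 0%N.
    by apply: (gD 0%N); exists 0%N, (g (pickle (0%N, 0%N))).
  have DSx x k y : S ((x, k), y) -> Dm S x by move=> Sxy; exists k, y.
  split.
  - move=> x k y [Sxy|[i [k' [-> <- ->]]]].
      have [Fx Fy [k'' [y'' Sy]]] := h1 _ _ _ Sxy; split => //.
      by exists k'', y''; left.
    split => //; exists 0%N, (g (pickle (pickle (i, k), 0%N))).
    by right; exists (pickle (i, k)), 0%N.
  - move=> [x k] y y' [S1|[i [k1 [ex ek ey]]]] [S2|[i' [k2 [ex' ek' ey']]]].
    + exact: h2 _ _ _ S1 S2.
    + by exfalso; apply: (gD i'); rewrite -ex'; apply: DSx S1.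
    + by exfalso; apply: (gD i); rewrite -ex; apply: DSx S2.
    + have eii : i = i' by apply: gI; rewrite -ex -ex'.
      by rewrite ey ey' eii -ek -ek'.
  - move=> [x k] [x' k'] y [S1|[i [k1 [ex ek ey]]]] [S2|[i' [k2 [ex' ek' ey']]]].
    + exact: h3 _ _ _ S1 S2.
    + exfalso; apply: (gD (pickle (i', k2))).
      by have [_ _ ] := h1 _ _ _ S1; rewrite -ey'.
    + exfalso; apply: (gD (pickle (i, k1))).
      by have [_ _ ] := h1 _ _ _ S2; rewrite -ey.
    + move: ey'; rewrite ey => /gI /(pcan_inj (@pickleK _)) [e1 e2].
      by rewrite ex ex' ek ek' e1 e2.
  - move=> x [k [y [Sxy|[i [k' [ex _ _]]]]]] k1.
      by have [y' Sy'] := h4 x (DSx _ _ _ Sxy) k1; exists y'; left.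
    by exists (g (pickle (i, k1))); right; exists i, k1; rewrite ex.
have [d0 Dd0] : exists d, Dm S d.
  apply: contrapT => nD; apply: Finf.
  apply: sub_finite_set finR => x Fx; split => // Dx; apply: nD; by exists x.
have /finite_set_countable/pcard_injP[r rinj] := finR.
pose Sf (p : T * nat) : T :=
  match pselect (exists y, S (p, y)) with
  | left e => projT1 (cid e)
  | right _ => point
  end.
have SfP p : (exists y, S (p, y)) -> S (p, Sf p).
  rewrite /Sf; case: pselect => // e _; exact: projT2 (cid e).
have Sfx x k : Dm S x -> S ((x, k), Sf (x, k)).
  by move=> Dx; apply: SfP; apply: h4.
pose hh (z : T * nat) : T :=
  if `[< Dm S z.1 >] then Sf (z.1, (z.2).*2)
  else Sf (d0, (pickle (r z.1, z.2)).*2.+1).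
apply: (@card_le_inj _ _ _ _ hh); last first.
  move=> [x k] [Fx _]; rewrite /hh /=; case: asboolP => Dx.
    by have [_ ? _] := h1 _ _ _ (Sfx x k.*2 Dx).
  by have [_ ? _] := h1 _ _ _ (Sfx d0 (pickle (r x, k)).*2.+1 Dd0).
move=> [x k] [x' k']; rewrite !in_setE => -[Fx _] [Fx' _].
rewrite /hh /=; case: asboolP => Dx; case: asboolP => Dx' e.
- have H1 := Sfx x (k.*2) Dx; have H2 := Sfx x' (k'.*2) Dx'.
  rewrite e in H1; have := h3 _ _ _ H1 H2.
  by case=> -> /(can_inj doubleK) ->.
- have H1 := Sfx x (k.*2) Dx; have H2 := Sfx d0 (pickle (r x', k')).*2.+1 Dd0.
  rewrite e in H1; have := h3 _ _ _ H1 H2.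
  by case=> _ /(congr1 odd) /=; rewrite !odd_double.
- have H1 := Sfx x' (k'.*2) Dx'; have H2 := Sfx d0 (pickle (r x, k)).*2.+1 Dd0.
  rewrite -e in H1; have := h3 _ _ _ H1 H2.
  by case=> _ /(congr1 odd) /=; rewrite !odd_double.
- have H1 := Sfx d0 (pickle (r x, k)).*2.+1 Dd0.
  have H2 := Sfx d0 (pickle (r x', k')).*2.+1 Dd0.
  rewrite e in H1; have := h3 _ _ _ H1 H2.
  case=> -[] /(can_inj doubleK) /(pcan_inj (@pickleK _)) [er ->].
  by rewrite (rinj x x') // in_setE.
Qed.

End CardX.
Lemma le_eq_nat (a b : nat) : (forall j, (j < a)%N = (j < b)%N) -> a = b.
Proof.
move=> H; apply/eqP; rewrite eqn_leq; apply/andP; split.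
  by rewrite leqNgt H ltnn.
by rewrite leqNgt -H ltnn.
Qed.

Lemma to_infty (f : nat -> nat) :
  (forall N, exists n0, forall n, (n0 <= n)%N -> (N <= f n)%N) ->
  f x @[x --> \oo] --> \oo.
Proof.
move=> H; apply/cvgnyPge => A; have [n0 Hn0] := H A.
by exists n0 => // n /= /Hn0.
Qed.

Lemma incr_ge (e : nat -> nat) :
  (forall m n, (m < n)%N -> (e m < e n)%N) -> forall n, (n <= e n)%N.
Proof.
move=> einc; elim=> [//|n IH]; apply: leq_ltn_trans IH _; exact: einc.
Qed.

Lemma incr_le (e : nat -> nat) :
  (forall m n, (m < n)%N -> (e m < e n)%N) -> forall m n, (e m < e n)%N = (m < n)%N.
Proof.
move=> einc m n; case: (ltnP m n) => [/einc //|nm].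
apply/negbTE; rewrite -leqNgt; move: nm; rewrite leq_eqVlt.
by case/orP => [/eqP -> //|/einc/ltnW].
Qed.

Lemma incr_inj (e : nat -> nat) :
  (forall m n, (m < n)%N -> (e m < e n)%N) -> injective e.
Proof.
move=> einc m n emn.
by case: (ltngtP m n) => // h; have := einc _ _ h; rewrite emn ltnn.
Qed.

Lemma incr_infty (e : nat -> nat) :
  (forall m n, (m < n)%N -> (e m < e n)%N) -> e x @[x --> \oo] --> \oo.
Proof.
move=> einc; apply: to_infty => N; exists N => n Nn.
by apply: (leq_trans Nn); apply: incr_ge.
Qed.

Definition indf {R : realType} (X : set nat) (u : nat -> R) : nat -> R :=
  fun n => if `[< X n >] then u n else 0.

Section Enum.
Variables (X : set nat) (e : nat -> nat).
Hypothesis eX : incr_enum X e.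

Fixpoint cnt (N : nat) : nat :=
  if N is N'.+1 then (cnt N' + `[< X N' >])%N else 0%N.

Lemma cnt_spec N k : (k < cnt N)%N = (e k < N)%N.
Proof.
have [einc er] := eX.
elim: N k => [|N IH] k /=; first by rewrite !ltn0.
case: asboolP => XN.
  have : range e N by rewrite er.
  case=> k0 _ ek0.
  have k0c : k0 = cnt N.
    by apply: le_eq_nat => j; rewrite IH -ek0 (@incr_le _ einc).
  rewrite /= addn1 !ltnS [(e k <= N)%N]leq_eqVlt [(k <= cnt N)%N]leq_eqVlt IH.
  congr orb.
  apply/eqP/eqP => [->|]; first by rewrite -k0c.
  move=> ekN; rewrite -k0c; apply: (@incr_inj _ einc); by rewrite ekN ek0.
rewrite /= addn0 IH ltnS [(e k <= N)%N]leq_eqVlt; case: eqP => //= ekN.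
by exfalso; apply: XN; rewrite -er -ekN; exists k.
Qed.

Lemma cnt_e k : cnt (e k) = k.
Proof.
have [einc _] := eX.
by apply: le_eq_nat => j; rewrite cnt_spec (@incr_le _ einc).
Qed.

Lemma e_cnt N : X N -> e (cnt N) = N.
Proof.
have [einc er] := eX => XN.
have : range e N by rewrite er.
case=> k0 _ <-; by rewrite cnt_e.
Qed.

Lemma cnt_mono m n : (m <= n)%N -> (cnt m <= cnt n)%N.
Proof.
elim: n => [|n IH]; first by rewrite leqn0 => /eqP ->.
rewrite leq_eqVlt => /orP[/eqP -> //|]; rewrite ltnS => /IH /leq_trans; apply.
by rewrite /= leq_addr.
Qed.

Lemma cnt_infty : cnt x @[x --> \oo] --> \oo.
Proof.
apply: to_infty => N; exists (e N) => n Nn.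
by rewrite -[X in (X <= _)%N](cnt_e N); apply: cnt_mono.
Qed.

Lemma series_ind (R : realType) (u : nat -> R) N :
  series (indf X u) N = series (u \o e) (cnt N).
Proof.
elim: N => [|N IH]; first by rewrite /series /= !big_geq.
rewrite seriesSr IH /= /indf; case: asboolP => XN.
  by rewrite addn1 seriesSr /= e_cnt.
by rewrite addn0 addr0.
Qed.

Lemma enum_ind (R : realType) (u : nat -> R) (l : R) :
  (series (u \o e) x @[x --> \oo] --> l) <-> (series (indf X u) x @[x --> \oo] --> l).
Proof.
split => H.
  have -> : series (indf X u) = series (u \o e) \o cnt.
    by apply: funext => N; rewrite series_ind.
  exact: cvg_comp cnt_infty H.
have -> : series (u \o e) = series (indf X u) \o e.
  by apply: funext => k /=; rewrite series_ind cnt_e.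
by apply: cvg_comp H; apply: incr_infty; case: eX.
Qed.

End Enum.

Lemma infinite_ge (X : set nat) : infinite_set X -> forall m, exists x, X x /\ (m <= x)%N.
Proof.
move=> Xinf m; apply: contrapT => H; apply: Xinf.
apply: (@sub_finite_set _ _ `I_m); last exact: finite_II.
move=> x Xx /=; rewrite ltnNge; apply/negP => mx; apply: H; by exists x.
Qed.

Lemma exists_enum (X : set nat) : infinite_set X -> exists e, incr_enum X e.
Proof.
move=> Xinf.
have nxtP m : {x | [/\ X x, (m <= x)%N & forall y, X y -> (m <= y)%N -> (x <= y)%N]}.
  have ex : exists n, (fun x => `[< X x >] && (m <= x)%N) n.
    by have [x [Xx mx]] := @infinite_ge X Xinf m; exists x; rewrite mx andbT; apply/asboolP.
  have [x /andP[/asboolP Xx mx] xmin] := find_ex_minn ex.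
  exists x; split => // y Xy my; apply: xmin; rewrite my andbT; exact/asboolP.
pose nxt m := proj1_sig (nxtP m).
have nxtX m : X (nxt m) by have [] := proj2_sig (nxtP m).
have nxtge m : (m <= nxt m)%N by have [] := proj2_sig (nxtP m).
have nxtmin m y : X y -> (m <= y)%N -> (nxt m <= y)%N.
  by have [_ _ H] := proj2_sig (nxtP m); apply: H.
pose fix e n := if n is n'.+1 then nxt (e n').+1 else nxt 0%N.
have eS n : (e n < e n.+1)%N by exact: nxtge.
have einc : forall m n, (m < n)%N -> (e m < e n)%N.
  move=> m n; elim: n => // n IH; rewrite ltnS leq_eqVlt => /orP[/eqP ->//|/IH].
  by move/ltn_trans; apply.
exists e; split => //; apply/seteqP; split; first by move=> _ [[|n] _ <-]; apply: nxtX.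
move=> x Xx.
suff H : forall d n, (x - e n <= d)%N -> (e n <= x)%N -> range e x.
  by apply: (H x 0%N); [rewrite leq_subr | exact: nxtmin].
elim=> [|d IH] n.
  by rewrite leqn0 subn_eq0 => h1 h2; exists n => //; apply/eqP; rewrite eqn_leq h1 h2.
move=> h1; rewrite leq_eqVlt => /orP[/eqP enx|lt]; first by exists n.
apply: (IH n.+1); last exact: nxtmin.
have : (e n < e n.+1)%N := eS n.
move: h1; case: (leqP x (e n.+1)) => [/eqP|]; first by rewrite -subn_eq0 => ->.
move=> xlt h1 h3; rewrite -ltnS; apply: leq_trans h1.
by rewrite ltn_sub2l.
Qed.
Lemma nearN {P : nat -> Prop} :
  (\forall n \near \oo, P n) -> exists N, forall n, (N <= n)%N -> P n.
Proof. by move=> [N _ HN]; exists N => n /HN. Qed.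

Lemma series0 (R : realType) (g : nat -> R) : series g 0 = 0.
Proof. by rewrite /series /= big_geq. Qed.

Lemma series_cut (R : realType) (g : nat -> R) N M : (N <= M)%N ->
  series (fun j => if (N <= j)%N then g j else 0) M = series g M - series g N.
Proof.
move=> NM; rewrite sub_series_geq // /series /= (big_cat_nat (leq0n N) NM) /=.
rewrite [X in X + _]big1_seq ?add0r; last first.
  by move=> j /andP[_]; rewrite mem_index_iota => /andP[_ jN]; rewrite leqNgt jN.
by apply: eq_big_nat => j /andP[Nj _]; rewrite Nj.
Qed.

Lemma find_M (R : realType) (p : nat -> R) (t d : R) :
  (forall j, 0 <= p j) -> (forall j, p j < d) ->
  (forall B, exists M, B < series p M) -> 0 <= t ->
  exists M, t < series p M /\ series p M < t + d.
Proof.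
move=> p0 pd unb t0.
have ex : exists M, (fun M => t < series p M) M by apply: unb.
have [M tM Mmin] := find_ex_minn ex.
exists M; split => //.
case: M tM Mmin => [|M] tM Mmin; first by move: tM; rewrite series0; lra.
have : series p M <= t.
  rewrite leNgt; apply/negP => h; have := Mmin _ h; by rewrite ltnn.
by rewrite seriesSr => h; have := pd M; lra.
Qed.

Lemma corr_series (R : realType) (c : nat -> R) M :
  series (fun n => if (n < M)%N then c n else 0) x @[x --> \oo] --> series c M.
Proof.
apply: cvg_near_cst; exists M => // n /= Mn.
rewrite -(subnKC Mn); elim: (n - M)%N => [|k IH].
  by rewrite addn0 /series /=; apply: eq_big_nat => j /andP[_ ->].
by rewrite addnS seriesSr IH ltnNge leq_addr /= addr0.
Qed.

Definition modX (X : set nat) (l : seq nat) : set nat :=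
  fun j => if j \in l then ~ X j else X j.

Lemma modX_nil X : modX X [::] = X.
Proof. by apply: funext => j; rewrite /modX in_nil. Qed.

Lemma modX_inf X l : inf_coinf X -> inf_coinf (modX X l).
Proof.
move=> [Xi Xc]; split.
  have H : X `\` [set` l] `<=` modX X l.
    by move=> j [Xj /negP jl]; rewrite /modX (negbTE jl).
  exact: (sub_infinite_set H (infinite_setD Xi (finite_seq l))).
have H : ~` X `\` [set` l] `<=` ~` modX X l.
  by move=> j [Xj /negP jl]; rewrite /= /modX (negbTE jl).
exact: (sub_infinite_set H (infinite_setD Xc (finite_seq l))).
Qed.

Section Adjust.
Variables (R : realType) (u : nat -> R) (X : set nat) (l0 al be : R).
Hypotheses (u0 : u x @[x --> \oo] --> 0)
  (upos : series (fun n => Num.max (u n) 0) x @[x --> \oo] --> +oo)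
  (uneg : series (fun n => Num.min (u n) 0) x @[x --> \oo] --> -oo)
  (Hl0 : series (indf X u) x @[x --> \oo] --> l0) (ab : al < be).

Let w n := if `[< X n >] then - u n else u n.

Lemma modE l n : indf (modX X l) u n =
  indf X u n + (if n \in l then w n else 0).
Proof.
rewrite /indf /modX /w /=.
case: (n \in l) => /=; case: (asboolP (X n)) => Xn.
- by case: (asboolP (~ X n)) => // _; rewrite addrN.
- by case: (asboolP (~ X n)) => // _; rewrite add0r.
- by rewrite addr0.
- by rewrite addr0.
Qed.

Lemma adjust : exists l : seq nat, exists2 L, al < L < be &
  series (indf (modX X l) u) x @[x --> \oo] --> L.
Proof.
have ab' := ab.
pose d := be - al.
have d0 : 0 < d by rewrite /d; lra.
have [N HN] : exists N, forall j, (N <= j)%N -> `|w j| < d.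
  have [N HN] := nearN (proj1 (cvgrPdist_lt _ _) u0 d d0).
  exists N => j /HN; rewrite sub0r normrN /w; case: asboolP => _ //.
  by rewrite normrN.
have [N1 HN1] := nearN (proj1 (cvgrPdist_lt _ _) Hl0 1 ltr01).
have Hs n : (N1 <= n)%N -> l0 - 1 < series (indf X u) n < l0 + 1.
  by move=> /HN1; rewrite ltr_norml; move=> /andP[h1 h2]; apply/andP; split; lra.
have [lal|all] := leP l0 al.
  pose g j := Num.max (w j) 0.
  pose p j := if (N <= j)%N then g j else 0.
  have gE n : series g n = series (fun n => Num.max (u n) 0) n - series (indf X u) n.
    rewrite /series /= -sumrB; apply: eq_bigr => j _.
    rewrite /g /w /indf; case: asboolP => _; last by rewrite subr0.
    rewrite !maxEle; case: ifP; case: ifP; lra.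
  have p0 j : 0 <= p j by rewrite /p; case: ifP => // _; rewrite /g le_max lexx orbT.
  have pd j : p j < d.
    rewrite /p; case: ifP => Nj //; rewrite /g; have := HN _ Nj.
    by rewrite maxEle; case: ifP => _ //; apply: le_lt_trans; exact: ler_norm.
  have unb B : exists M, B < series p M.
    have [N2 HN2] := nearN (cvgry_gt upos (B + l0 + 1 + series g N)).
    exists (maxn N (maxn N1 N2)); rewrite series_cut ?leq_maxl // gE.
    have := HN2 (maxn N (maxn N1 N2)) (leq_trans (leq_maxr N1 N2) (leq_maxr _ _)).
    have /andP[_] := Hs (maxn N (maxn N1 N2)) (leq_trans (leq_maxl N1 N2) (leq_maxr _ _)).
    lra.
  have [M [tM Md]] := @find_M R p (al - l0) d p0 pd unb (ltac:(lra)).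
  rewrite /d in Md.
  pose lst := [seq j <- iota 0 M | (N <= j)%N && (0 < w j)].
exists lst, (l0 + series p M).
    apply/andP; split; lra.
  have -> : indf (modX X lst) u = indf X u + (fun n => if n \in lst then w n else 0).
    by apply: funext => n; exact: modE.
  rewrite seriesD; apply: cvgD => //.
  have -> : (fun n => if n \in lst
     then w n else 0) = (fun n => if (n < M)%N then p n else 0).
    apply: funext => n; rewrite /lst mem_filter mem_iota add0n /= /p /g.
    case: (ltnP n M) => nM; last by rewrite andbF.
    rewrite andbT; case: (leqP N n) => Nn //=.
    by rewrite maxEle; case: ifP => h; case: ltP => //; lra.
  exact: corr_series.
have [lbe|bel] := leP be l0; last first.
  by exists [::], l0; [apply/andP; split | rewrite modX_nil].
pose g j := - Num.min (w j) 0.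
pose p j := if (N <= j)%N then g j else 0.
have gE n : series g n = - series (fun n => Num.min (u n) 0) n + series (indf X u) n.
  rewrite /series /= -sumrN -big_split; apply: eq_bigr => j _ /=.
  rewrite /g /w /indf; case: asboolP => _; last by rewrite addr0.
  rewrite !minEle; case: ifP; case: ifP; lra.
have p0 j : 0 <= p j.
  by rewrite /p; case: ifP => // _; rewrite /g oppr_ge0 ge_min lexx orbT.
have pd j : p j < d.
  rewrite /p; case: ifP => Nj //; rewrite /g; have := HN _ Nj.
  rewrite minEle; case: ifP => _; last by rewrite oppr0.
  by apply: le_lt_trans; rewrite -normrN; exact: ler_norm.
have unb B : exists M, B < series p M.
  have [N2 HN2] := nearN (proj1 (cvgrNyPlt _) uneg (- (B - l0 + 1 + series g N))).
  exists (maxn N (maxn N1 N2)); rewrite series_cut ?leq_maxl // gE.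
  have := HN2 (maxn N (maxn N1 N2)) (leq_trans (leq_maxr N1 N2) (leq_maxr _ _)).
  have /andP[h _] := Hs (maxn N (maxn N1 N2)) (leq_trans (leq_maxl N1 N2) (leq_maxr _ _)).
  lra.
have [M [tM Md]] := @find_M R p (l0 - be) d p0 pd unb (ltac:(lra)).
rewrite /d in Md.
pose lst := [seq j <- iota 0 M | (N <= j)%N && (w j < 0)].
exists lst, (l0 + series (fun n => - p n) M).
  have -> : series (fun n => - p n) M = - series p M by rewrite /series /= sumrN.
  apply/andP; split; lra.
have -> : indf (modX X lst) u = indf X u + (fun n => if n \in lst then w n else 0).
  by apply: funext => n; exact: modE.
rewrite seriesD; apply: cvgD => //.
have -> : (fun n => if n \in lst
   then w n else 0) = (fun n => if (n < M)%N then - p n else 0).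
  apply: funext => n; rewrite /lst mem_filter mem_iota add0n /= /p /g.
  case: (ltnP n M) => nM; last by rewrite andbF.
  rewrite andbT; case: (leqP N n) => Nn //=; last by rewrite oppr0.
  by rewrite opprK minEle; case: ifP => h; case: ltP => //; lra.
exact: corr_series.
Qed.

End Adjust.
Section Diag.
Variable Xs : nat -> set nat.
Hypothesis Xic : forall i, inf_coinf (Xs i).

Definition pidx (k : nat) : nat := logn 2 (trunc_log 2 k).+1.
Definition trig (n s : nat) : bool :=
  if odd s then ~~ `[< Xs (pidx s./2) n >] else `[< Xs (pidx s./2) n >].
Fixpoint st (n : nat) : nat :=
  if n is n'.+1 then (st n' + trig n' (st n'))%N else 0%N.
Definition aseq (n : nat) : rat :=
  if trig n (st n) then
    (if odd (st n) then - harmonic (st n)./2 else harmonic (st n)./2)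
  else 0.

Lemma st_S n : st n.+1 = (st n + trig n (st n))%N.
Proof. by []. Qed.

Lemma st_mono {m n} : (m <= n)%N -> (st m <= st n)%N.
Proof.
elim: n => [|n IH]; first by rewrite leqn0 => /eqP ->.
rewrite leq_eqVlt => /orP[/eqP -> //|]; rewrite ltnS => /IH /leq_trans; apply.
by rewrite st_S leq_addr.
Qed.

Lemma st_progress n : exists n', (st n < st n')%N.
Proof.
set s := st n.
have [x [Xx nx]] : exists x, (if odd s then ~` Xs (pidx s./2) else Xs (pidx s./2)) x
   /\ (n <= x)%N.
  have [Xi Xc] := Xic (pidx s./2).
  by case: (odd s); apply: infinite_ge.
exists x.+1; rewrite st_S.
have sx := st_mono nx.
case: (ltnP s (st x)) => [lt|le]; first by apply: (leq_trans lt); rewrite leq_addr.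
have -> : st x = s by apply/eqP; rewrite eqn_leq le sx.
have -> : trig x s.
  by rewrite /trig; case: (odd s) Xx => Xx; [apply/negP => /asboolP | apply/asboolP].
by rewrite addn1.
Qed.

Lemma st_hit v : exists n, st n = v.
Proof.
elim: v => [|v [n snv]]; first by exists 0%N.
have ex : exists m, (fun m => (v < st m)%N) m by have := st_progress n; rewrite snv.
have [m vm mmin] := find_ex_minn ex.
case: m vm mmin => [|m] vm mmin; first by [].
exists m.+1; apply/eqP; rewrite eqn_leq vm andbT.
have : (st m <= v)%N by rewrite leqNgt; apply/negP => /mmin; rewrite ltnn.
by rewrite st_S; case: (trig m (st m)) => /=; lia.
Qed.

Lemma st_ge N : exists n0, forall n, (n0 <= n)%N -> (N <= st n)%N.
Proof. by have [n0 h] := st_hit N; exists n0 => n /st_mono; rewrite h. Qed.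

Variable R : realType.

Lemma ratr_harm k : ratr (harmonic k : rat) = (harmonic k : R).
Proof. by rewrite /harmonic /= fmorphV rmorph_nat. Qed.

Let A := rseq R aseq.

Lemma A_E n : A n = if trig n (st n) then
    (if odd (st n) then - harmonic (st n)./2 else harmonic (st n)./2) else 0.
Proof.
rewrite /A /rseq /aseq; case: ifP => _; last by rewrite rmorph0.
by case: ifP => _; [rewrite rmorphN; congr (- _)|]; exact: ratr_harm.
Qed.

Lemma SE n : series A n = if odd (st n) then harmonic (st n)./2 else 0.
Proof.
elim: n => [|n IH]; first by rewrite series0.
rewrite seriesSr IH A_E st_S; case: (trig n (st n)); last by rewrite addn0 addr0.
rewrite addn1 /=; case: ifP => os /=.
  by rewrite addrN.
have -> : uphalf (st n) = (st n)./2 by lia.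
by rewrite add0r.
Qed.

Lemma PosE n : series (fun n => Num.max (A n) 0) n = series harmonic (uphalf (st n)).
Proof.
elim: n => [|n IH]; first by rewrite !series0.
rewrite seriesSr IH A_E st_S; case: (trig n (st n)); last first.
  by rewrite addn0 maxxx addr0.
rewrite addn1; case: ifP => os.
  have -> : uphalf (st n).+1 = uphalf (st n) by lia.
  rewrite maxEle; case: ifP => h; first by rewrite addr0.
  by exfalso; move/negbT: h; rewrite -ltNge oppr_gt0 ltNge ltW ?harmonic_gt0.
have -> : uphalf (st n).+1 = (uphalf (st n)).+1 by lia.
have -> : (st n)./2 = uphalf (st n) by lia.
rewrite seriesSr maxEle; case: ifP => h //.
by exfalso; move: h; rewrite leNgt harmonic_gt0.
Qed.

Lemma NegE n : series (fun n => Num.min (A n) 0) n = - series harmonic (st n)./2.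
Proof.
elim: n => [|n IH]; first by rewrite !series0 oppr0.
rewrite seriesSr IH A_E st_S; case: (trig n (st n)); last first.
  by rewrite addn0 minxx addr0.
rewrite addn1; case: ifP => os.
  have -> : ((st n).+1)./2 = ((st n)./2).+1 by lia.
  rewrite seriesSr opprD minEle; case: ifP => h //.
  by exfalso; move: h; rewrite oppr_le0 harmonic_ge0.
have -> : ((st n).+1)./2 = (st n)./2 by lia.
rewrite minEle; case: ifP => h; last by rewrite addr0.
by exfalso; move: h; rewrite leNgt harmonic_gt0.
Qed.

Lemma H_mono : {homo series (@harmonic R) : m n / (m <= n)%N >-> m <= n}.
Proof.
move=> m n mn; rewrite /series /=.
by apply: (nondecreasing_series (P := xpredT) (m := 0%N)) => // k _ _; apply: harmonic_ge0.
Qed.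

Lemma H_unb B : exists k, B < series (@harmonic R) k.
Proof.
apply: contrapT => H; apply: (@dvg_harmonic R).
apply: nondecreasing_is_cvgn; first exact: H_mono.
exists B => _ [k _ <-]; rewrite leNgt; apply/negP => h; apply: H; by exists k.
Qed.

Lemma half_infty K : exists n0, forall n, (n0 <= n)%N -> (K <= (st n)./2)%N.
Proof.
have [n0 h] := st_ge K.*2; exists n0 => n /h; lia.
Qed.

Lemma harm_small e : 0 < e -> exists K, forall k, (K <= k)%N -> (harmonic k : R) < e.
Proof.
move=> e0; have [K HK] := nearN (proj1 (cvgrPdist_lt _ _) (@cvg_harmonic R) e e0).
exists K => k /HK; rewrite sub0r normrN ger0_norm //; exact: harmonic_ge0.
Qed.

Lemma S_cc_aseq : S_cc R aseq.
Proof.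
split; [|split; [|split]].
- apply/(cvgrPdist_lt _ _) => e e0.
  have [K HK] := harm_small e e0; have [n0 Hn0] := half_infty K.
  exists n0 => // n /Hn0 /HK; rewrite sub0r normrN -/A A_E.
  case: ifP => _; last by rewrite normr0.
  by case: ifP => _; rewrite ?normrN ger0_norm ?harmonic_ge0.
- exists 0; apply/(cvgrPdist_lt _ _) => e e0.
  have [K HK] := harm_small e e0; have [n0 Hn0] := half_infty K.
  exists n0 => // n /Hn0 /HK; rewrite sub0r normrN -/A SE.
  case: ifP => _; last by rewrite normr0.
  by rewrite ger0_norm ?harmonic_ge0.
- apply/cvgryPge => B; have [k Hk] := H_unb B.
  have [n0 h] := st_ge k.*2; exists n0 => // n /h kn.
  rewrite -/A PosE; apply: (le_trans (ltW Hk)); apply: H_mono; lia.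
- apply/cvgrNyPle => B; have [k Hk] := H_unb (- B).
  have [n0 h] := st_ge k.*2; exists n0 => // n /h kn.
  rewrite -/A NegE lerNl; apply: (le_trans (ltW Hk)); apply: H_mono; lia.
Qed.

Lemma pidx_win t k : (2 ^ t <= k < 2 ^ t.+1)%N -> pidx k = logn 2 t.+1.
Proof. by move=> h; rewrite /pidx (@trunc_log_eq 2 t k isT h). Qed.

Lemma sched_ex i T : exists t, (T <= t)%N /\ logn 2 t.+1 = i.
Proof.
have p0 : (0 < 2 ^ i)%N by rewrite expn_gt0.
have le1 : (T.*2.+1 <= 2 ^ i * T.*2.+1)%N by rewrite leq_pmull.
exists (2 ^ i * T.*2.+1).-1%N; split; first by lia.
rewrite prednK ?muln_gt0 ?p0 // lognM // pfactorK // logn_coprime ?addn0 //.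
by rewrite coprime2n /= odd_double.
Qed.

Lemma harm_double K : (0 < K)%N ->
  1 / 2 <= series (@harmonic R) K.*2 - series (@harmonic R) K.
Proof.
move=> K0; rewrite sub_double_series.
apply: (@le_trans _ _ (\sum_(K <= k < K.*2) (K.*2%:R : R)^-1)); last first.
  apply: ler_sum_nat => k /andP[_ kK]; rewrite /harmonic /=.
  rewrite lef_pV2 ?posrE ?ltr0n //; last by lia.
  rewrite ler_nat; lia.
rewrite sumr_const_nat.
have -> : (K.*2 - K)%N = K by lia.
have -> : ((K.*2)%:R : R)^-1 *+ K = 1 / 2.
  rewrite -mulr_natr -mul2n natrM; field.
  by rewrite pnatr_eq0 -lt0n.
by [].
Qed.

Lemma window i t n1 : logn 2 t.+1 = i -> st n1 = ((2 ^ t).*2)%N ->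
  forall d, (st (n1 + d) <= (2 ^ t.+1).*2)%N ->
  series (indf (Xs i) A) (n1 + d)%N - series (indf (Xs i) A) n1 =
  series (@harmonic R) (uphalf (st (n1 + d)%N)) - series (@harmonic R) (2 ^ t)%N.
Proof.
move=> ht hs; elim=> [|d IH].
  by move=> _; rewrite addn0 hs uphalf_double !subrr.
rewrite addnS => hd.
have hd' : (st (n1 + d) <= (2 ^ t.+1).*2)%N.
  by apply: leq_trans hd; apply: st_mono.
have e2 : (2 ^ t.+1 = (2 ^ t).*2)%N by rewrite expnS mul2n.
have hlo : ((2 ^ t).*2 <= st (n1 + d))%N by rewrite -hs; apply: st_mono; rewrite leq_addr.
rewrite seriesSr addrAC (IH hd') /indf A_E.
move: hd; rewrite st_S.
case Etr: (trig (n1 + d) (st (n1 + d))) => /= hd; last first.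
  by rewrite addn0; case: ifP => _; rewrite addr0.
have hp : pidx (st (n1 + d))./2 = i.
  by rewrite -ht; apply: pidx_win; move: hd hlo; rewrite e2; lia.
move: Etr; rewrite /trig hp addn1.
case: ifP => os Etr.
  have -> : uphalf (st (n1 + d)).+1 = uphalf (st (n1 + d)) by lia.
  by case: asboolP Etr => // _ _; rewrite addr0.
have -> : uphalf (st (n1 + d)).+1 = (uphalf (st (n1 + d))).+1 by lia.
have -> : (st (n1 + d))./2 = uphalf (st (n1 + d)) by lia.
case: asboolP Etr => // _ _.
by rewrite seriesSr addrAC.
Qed.

Lemma no_sub i : ~ exists l : R, subsum_to aseq (Xs i) l.
Proof.
move=> [l [e [eX He]]].
have Hi := (enum_ind _ _ eX _ (rseq R aseq) l).1 He.
have [N0 HN0] := nearN (proj1 (cvgrPdist_lt _ _) Hi (1/8) (ltac:(lra))).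
have [t [tge ht]] := sched_ex i (st N0).
have [n1 h1] := st_hit ((2 ^ t).*2)%N.
have [n2 h2] := st_hit ((2 ^ t.+1).*2)%N.
have e2 : (2 ^ t.+1 = (2 ^ t).*2)%N by rewrite expnS mul2n.
have tlt : (t < 2 ^ t)%N by apply: ltn_expl.
have n1N : (N0 <= n1)%N.
  rewrite leqNgt; apply/negP => /ltnW /st_mono; rewrite h1; lia.
have n12 : (n1 <= n2)%N.
  rewrite leqNgt; apply/negP => /ltnW /st_mono; rewrite h1 h2 e2.
  have : (0 < 2 ^ t)%N by rewrite expn_gt0.
  lia.
have W := window i t n1 ht h1 (n2 - n1).
rewrite subnKC // h2 uphalf_double in W.
have W' := W (leqnn _).
have := harm_double (2 ^ t)%N (ltac:(by rewrite expn_gt0)); rewrite -e2 -W'.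
have := HN0 _ n1N; have := HN0 _ (leq_trans n1N n12).
rewrite /= !ltr_norml => /andP[a1 a2] /andP[b1 b2].
lra.
Qed.

End Diag.
Lemma evens_ic : inf_coinf [set n | ~~ odd n].
Proof.
split.
  apply/infiniteP; apply: (@card_le_inj _ _ _ _ double).
    by move=> x y _ _; apply: (can_inj doubleK).
  by move=> n _ /=; rewrite odd_double.
apply/infiniteP; apply: (@card_le_inj _ _ _ _ (fun n => n.*2.+1)).
  by move=> x y _ _ [] /(can_inj doubleK).
by move=> n _ /=; rewrite odd_double.
Qed.

Lemma ss_c_infinite {R : realType} {F : set (set nat)} :
  ss_c_family R F -> infinite_set F.
Proof.
move=> [Fic HF] Ffin.
have /pcard_injP [f finj] := finite_set_countable Ffin.
pose Xs n := match pselect (exists X, F X /\ f X = n) with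
  | left e => proj1_sig (cid e) | right _ => [set n | ~~ odd n] end.
have XsP n : inf_coinf (Xs n).
  rewrite /Xs; case: pselect => [e|_]; last exact: evens_ic.
  by case: (cid e) => X [FX _] /=; apply: Fic.
have XsF X : F X -> Xs (f X) = X.
  move=> FX; rewrite /Xs; case: pselect => [e|ne]; last first.
    by exfalso; apply: ne; exists X.
  by case: (cid e) => Y [FY fY] /=; apply: finj; rewrite ?in_setE.
have [X FX [l Hl]] := HF _ (@S_cc_aseq Xs XsP R).
by apply: (@no_sub Xs XsP R (f X)); exists l; rewrite XsF.
Qed.

Definition Gof (F : set (set nat)) : set (set nat) :=
  [set Y | exists X l, F X /\ Y = modX X l].

Lemma Gof_card {F : set (set nat)} : infinite_set F -> (Gof F #<= F)%card.
Proof.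
move=> Finf.
apply: (@card_le_trans _ _ _ ((fun p : set nat * seq nat => modX p.1 p.2) @`
    (F `*` [set: seq nat]))).
  by apply: subset_card_le => Y [X [l [FX ->]]]; exists (X, l).
apply: (card_le_trans (card_image_le _ _)).
apply: (@card_le_trans _ _ _ (F `*` [set: nat])); last exact: cardX_nat.
apply: (@card_le_inj _ _ _ _ (fun p : set nat * seq nat => (p.1, pickle p.2))).
  move=> [X l] [X' l'] _ _ /= [-> /(pcan_inj (@pickleK _)) ->] //.
by move=> [X l] [FX _].
Qed.

Lemma subsum_ind {R : realType} {a : nat -> rat} {X} {l} :
  subsum_to a X l -> series (indf X (rseq R a)) x @[x --> \oo] --> l.
Proof. by move=> [e [eX He]]; exact: (enum_ind _ _ eX _ (rseq R a) l).1 He. Qed.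

Lemma ind_subsum {R : realType} {a : nat -> rat} {X} {l : R} : infinite_set X ->
  series (indf X (rseq R a)) x @[x --> \oo] --> l -> subsum_to a X l.
Proof.
move=> Xinf H; have [e eX] := exists_enum X Xinf.
by exists e; split => //; exact: (enum_ind _ _ eX _ (rseq R a) l).2 H.
Qed.

Lemma Gof_adjust {R : realType} {F : set (set nat)} : ss_c_family R F ->
  forall a, S_cc R a -> forall al be : R, al < be ->
  exists2 Y, Gof F Y & exists2 L, al < L < be & subsum_to a Y L.
Proof.
move=> [Fic HF] a Sa al be ab.
have [X FX [l0 Hl0]] := HF a Sa.
have [u0 [_ [upos uneg]]] := Sa.
have [lst [L HL HL']] := adjust _ _ _ _ _ _ u0 upos uneg (subsum_ind Hl0) ab.
exists (modX X lst); first by exists X, lst.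
exists L => //; apply: ind_subsum => //.
by have [] := modX_inf X lst (Fic _ FX).
Qed.

Lemma Gof_ic (F : set (set nat)) : F `<=` inf_coinf -> Gof F `<=` inf_coinf.
Proof. by move=> Fic _ [X [l [FX ->]]]; apply: modX_inf; apply: Fic. Qed.

Lemma Gof_l {R : realType} {A : set R} {F : set (set nat)} :
  (exists a b : R, a < b /\ `]a, b[ `<=` A) ->
  ss_c_family R F -> ss_l_family A (Gof F).
Proof.
move=> [a0 [b0 [ab Hsub]]] HF; split; first by apply: Gof_ic; case: HF.
move=> a Sa; have [Y GY [L HL HY]] := Gof_adjust HF a Sa _ _ ab.
exists Y => //; exists L => //; apply: Hsub; rewrite /= in_itv /=; exact: HL.
Qed.

Lemma Gof_e {R : realType} {eps : R} {F : set (set nat)} :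
  0 < eps -> ss_c_family R F -> ss_e_family eps (Gof F).
Proof.
move=> e0 HF; split; first by apply: Gof_ic; case: HF.
move=> a Sa; have [_ [[s Hs] _]] := Sa.
have ab : s - eps < s + eps by lra.
have [Y GY [L /andP[h1 h2] HY]] := Gof_adjust HF a Sa _ _ ab.
exists Y => //; exists s, L; split => //; split => //.
rewrite ltr_norml; apply/andP; split; lra.
Qed.

Lemma e_c {R : realType} {eps : R} {F} : ss_e_family eps F -> ss_c_family R F.
Proof.
move=> [Fic HF]; split => // a Sa; have [X FX [s [l [_ [Hl _]]]]] := HF a Sa.
by exists X => //; exists l.
Qed.

Lemma l_c {R : realType} {A : set R} {F} : ss_l_family A F -> ss_c_family R F.
Proof.
move=> [Fic HF]; split => // a Sa; have [X FX [l _ Hl]] := HF a Sa.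
by exists X => //; exists l.
Qed.

Theorem mainTheorem12 (R : realType) (eps : R) (A : set R) :
  0 < eps ->
  (exists a b : R, a < b /\ `]a, b[ `<=` A) ->
  same_min_card (ss_e_family eps) (ss_l_family A) /\
  same_min_card (ss_l_family A) (@ss_c_family R).
Proof.
move=> e0 HA; split; split.
- move=> F HF; have HF' := e_c HF.
  exists (Gof F); split; first exact: Gof_l.
  by apply: Gof_card; apply: ss_c_infinite HF'.
- move=> G HG; have HG' := l_c HG.
  exists (Gof G); split; first exact: Gof_e.
  by apply: Gof_card; apply: ss_c_infinite HG'.
- move=> F HF; exists F; split; first exact: l_c HF.
  exact: card_lexx.
- move=> G HG; exists (Gof G); split; first exact: Gof_l.
  by apply: Gof_card; apply: ss_c_infinite HG.
Qed.
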